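(* Let $A$ be a linear Nakayama algebra with vertices labelled canonically $1\to 2\to\cdots\to n$. Then Ringel's homological permutation $\hat{h}$ of $A$ coincides with the Coxeter permutation $p_A$ of $A$ (computed with respect to this labelling).
   Context: $A=KQ/I$ with $K$ a field, $Q$ the quiver $1\to2\to\cdots\to n$ and $I$ an admissible ideal (a linear Nakayama algebra); modules are finitely generated right modules, $S_i$, $P(i)=e_iA$, $I(i)=D(Ae_i)$ are the simple, indecomposable projective and indecomposable injective modules at vertex $i$, and $I(S)$ denotes the injective envelope of $S$. $\Omega$ denotes the syzygy (kernel of a projective cover). For a simple module $S$ let $e(S)=\min\{\operatorname{pdim}S,\operatorname{pdim}I(S)\}$ (finite for Nakayama algebras), let $N(S)=S$ if $e(S)$ is odd and $N(S)=I(S)$ if $e(S)$ is even, and set $h(S)=\operatorname{top}\Omega^{e(S)}(N(S))$; this is a simple module and $h$ is a bijection on isoclasses of simple modules. Ringel's homological permutation is $\hat h:\{1,\ldots,n\}\to\{1,\ldots,n\}$, $\hat h(i)=j$ if $h(S_i)\cong S_j$. The Cartan matrix is $\omega_A=(\dim_K e_jAe_i)_{i,j}$, the Coxeter matrix is $C_A=-\omega_A^T\omega_A^{-1}$. A Bruhat decomposition of an invertible matrix $M$ is $M=U_1PU_2$ with $U_1,U_2$ upper triangular and $P$ a permutation matrix (uniquely determined by $M$). The Coxeter permutation $p_A$ is defined by $p_A(i)=j$ if the unique non-zero entry in column $i$ of the permutation matrix $P$ of a Bruhat decomposition of $C_A$ lies in row $j$. *)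

(* Defs.v *)
From HB Require Import structures.
From mathcomp Require Import all_boot all_order all_algebra all_fingroup.
Set Implicit Arguments. Unset Strict Implicit. Unset Printing Implicit Defensive.
Import GRing.Theory.

(* Vertices of the linear quiver 1 -> 2 -> ... -> n are coded by
   0, 1, ..., n-1 (vertex i+1 of the paper is coded by i).

   A linear Nakayama algebra A = KQ/I (I admissible) is determined up to
   isomorphism by its Kupisch series c : c i = length of P(i) = e_i A,
   whose composition factors are S_i, S_(i+1), ..., S_(i + c i - 1).
   Admissible Kupisch series:  c (n-1) = 1 (P(n) = S_n),
   c i >= 2 for i < n-1 (I contained in rad^2: no arrow is killed),
   and c i <= c (i+1) + 1 (e_i A rad = quotient of e_(i+1) A). *)
Definition kupisch (n : nat) (c : nat -> nat) : Prop :=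
  [/\ 0 < n, c n.-1 = 1,
      (forall i, i < n.-1 -> 2 <= c i) &
      (forall i, i < n.-1 -> c i <= (c i.+1).+1)].

(* Indecomposable modules are uniserial: M = (a, l) is the module with top
   S_a and length l (1 <= l <= c a), i.e. e_a A / e_a rad^l, with
   composition factors S_a, ..., S_(a+l-1). *)
Definition nmod := (nat * nat)%type.

Definition top (M : nmod) : nat := M.1.

Definition simple_mod (i : nat) : nmod := (i, 1).

Definition is_projective (c : nat -> nat) (M : nmod) : bool := M.2 == c M.1.

(* syzygy: kernel of the projective cover P(a) -> M, which is
   e_a rad^l = the module with top S_(a+l) and length c a - l *)
Definition syzygy (c : nat -> nat) (M : nmod) : nmod :=
  (M.1 + M.2, c M.1 - M.2).

(* injective envelope I(S_i) = I(i): the longest uniserial module with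
   socle S_i, i.e. top S_a with a minimal such that i < a + c a. *)
Definition inj_env (c : nat -> nat) (i : nat) : nmod :=
  let a := find (fun a => i < a + c a) (iota 0 i.+1) in (a, i.+1 - a).

(* projective dimension: least k such that Omega^k M is projective.
   Along the syzygy sequence the top strictly increases, so for a
   module over an algebra with n vertices n iterations suffice. *)
Fixpoint pdim_fuel (c : nat -> nat) (fuel : nat) (M : nmod) : nat :=
  match fuel with
  | 0 => 0
  | f.+1 => if is_projective c M then 0 else (pdim_fuel c f (syzygy c M)).+1
  end.

Definition pdim (n : nat) (c : nat -> nat) (M : nmod) : nat := pdim_fuel c n M.

Definition e_simple (n : nat) (c : nat -> nat) (i : nat) : nat :=
  minn (pdim n c (simple_mod i)) (pdim n c (inj_env c i)).

Definition N_simple (n : nat) (c : nat -> nat) (i : nat) : nmod :=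
  if odd (e_simple n c i) then simple_mod i else inj_env c i.

Definition hhat (n : nat) (c : nat -> nat) (i : nat) : nat :=
  top (iter (e_simple n c i) (syzygy c) (N_simple n c i)).

Local Open Scope ring_scope.

(* Cartan matrix (omega_A)_{i,j} = dim_K e_j A e_i = [ j <= i < j + c j ] *)
Definition cartan (n : nat) (c : nat -> nat) : 'M[rat]_n :=
  \matrix_(i < n, j < n) (if (j <= i < j + c j)%N then 1 else 0).

Definition coxeter (n : nat) (c : nat -> nat) : 'M[rat]_n :=
  - ((cartan n c)^T *m invmx (cartan n c)).

Definition upper_triangular (n : nat) (U : 'M[rat]_n) : Prop :=
  forall i j : 'I_n, (j < i)%N -> U i j = 0.

Definition bruhat_decomp (n : nat) (M : 'M[rat]_n) (s : 'S_n)
    (U1 U2 : 'M[rat]_n) : Prop :=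
  [/\ upper_triangular U1, upper_triangular U2 & M = U1 *m perm_mx s *m U2].

(* Main.v *)
Require Import Defs.
From mathcomp Require Import all_boot all_order all_algebra all_fingroup.
From mathcomp Require Import zify lra.
Set Implicit Arguments. Unset Strict Implicit. Unset Printing Implicit Defensive.
Import GRing.Theory Num.Theory.

Section Nak.
Variables (n : nat) (c : nat -> nat).
Hypothesis Hc : kupisch n c.

Lemma n_gt0 : 0 < n. Proof. by case: Hc. Qed.

Lemma c_pos x : x < n -> 0 < c x.
Proof.
case: Hc => n0 cl c2 _ xn.
case: (ltnP x n.-1) => h; first by have := c2 _ h; lia.
have -> : x = n.-1 by lia. by rewrite cl.
Qed.

Lemma c_bound y : y < n -> y + c y <= n.
Proof.
case: Hc => n0 cl c2 c3.
suff H : forall k x, x < n -> n.-1 - x = k -> x + c x <= n by move=> xn; exact: H.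
move=> k; elim: k => [|k IH] x xn hk.
  have -> : x = n.-1 by lia. rewrite cl; lia.
have h1 : x < n.-1 by lia.
have := c3 _ h1; have := IH x.+1 ltac:(lia) ltac:(lia); lia.
Qed.

Lemma c_mono y y' : y <= y' -> y' < n -> y + c y <= y' + c y'.
Proof.
case: Hc => n0 cl c2 c3.
suff H : forall k x x', x <= x' -> x' < n -> x' - x = k -> x + c x <= x' + c x'.
  by move=> le xn; exact: H.
move=> k; elim: k => [|k IH] x x' le xn hk.
  by have -> : x = x' by lia.
have h1 : x < n.-1 by lia.
have := c3 _ h1; have := IH x.+1 x' ltac:(lia) xn ltac:(lia); lia.
Qed.

Definition fc x := if x < n then x + c x else x.

Lemma fc_lt x : x < n -> fc x = x + c x.
Proof. by rewrite /fc => ->. Qed.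

Lemma fc_ge x : x <= fc x.
Proof. rewrite /fc; case: ifP => _; lia. Qed.

Lemma fc_gt x : x < n -> x < fc x.
Proof. move=> xn; rewrite fc_lt //; have := c_pos xn; lia. Qed.

Lemma fc_le_n x : x <= n -> fc x <= n.
Proof.
rewrite /fc; case: ifP => h xn //; exact: c_bound.
Qed.

Lemma fc_mono x x' : x <= x' -> fc x <= fc x'.
Proof.
rewrite /fc => le; case: (ltnP x' n) => h'.
  rewrite (leq_ltn_trans le h'); exact: c_mono.
case: ifP => h //; have := c_bound h; lia.
Qed.

Lemma iter_mono d x x' : x <= x' -> iter d fc x <= iter d fc x'.
Proof. by move=> le; elim: d => //= d IH; exact: fc_mono. Qed.

Lemma iter_ge d x : x <= iter d fc x.
Proof. elim: d => //= d IH; exact: leq_trans IH (fc_ge _). Qed.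

Lemma iter_leq d d' x : d <= d' -> iter d fc x <= iter d' fc x.
Proof.
move=> le; rewrite -(subnKC le) addnC iterD; exact: iter_ge.
Qed.

Lemma iter_lt d d' x : d < d' -> iter d fc x < n -> iter d fc x < iter d' fc x.
Proof.
move=> lt h; rewrite -(subnKC lt) addnC iterD /=.
apply: leq_trans (fc_gt h) (iter_ge _ _).
Qed.


Lemma LS y a nu :
  (forall z, z < a -> fc z < y) ->
  iter nu fc y.-1 < iter nu fc y ->
  iter nu fc y < iter nu.+1 fc a ->
  iter nu fc y < n ->
  forall d z, iter d fc z = iter nu fc y -> y <= z.
Proof.
move=> Hg H1 H2 H3; elim=> [|d IH] z hz.
  by rewrite /= in hz; rewrite hz iter_ge.
rewrite leqNgt; apply/negP => zy.
case: (ltngtP d.+1 nu) => hd.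
- have h1 := iter_mono d.+1 (ltnW zy).
  have h2 : iter d.+1 fc y < iter nu fc y.
    exact: (iter_lt hd (leq_ltn_trans (iter_leq _ (ltnW hd)) H3)).
  lia.
- case: (leqP a z) => az.
    have h1 := iter_mono nu.+1 az.
    have h2 := iter_leq z hd. lia.
  have := IH (fc z); rewrite -iterSr => /(_ hz).
  have := Hg _ az; lia.
- have h1 : iter nu fc z <= iter nu fc y.-1 by apply: iter_mono; lia.
  subst nu; lia.
Qed.

Lemma LI y a mu :
  (forall z, z < a -> fc z < y) ->
  iter mu fc y.-1 < iter mu fc y ->
  iter mu fc y = fc (iter mu fc a) ->
  (forall d, d < mu -> iter d fc y < n) ->
  forall q, q < iter mu fc a -> fc q = fc (iter mu fc a) ->
  forall d z, iter d fc z = q -> y <= z.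
Proof.
move=> Hg H1 H2 H3 q qk fq; elim=> [|d IH] z hz; rewrite leqNgt; apply/negP => zy.
  rewrite /= in hz; subst z.
  have E : iter 1 fc q = iter mu fc y by rewrite /= fq H2.
  case: (ltngtP 1 mu) => hd.
  - have h1 := iter_mono 1 (ltnW zy).
    have h2 : iter 1 fc y < iter mu fc y by exact: (iter_lt hd (H3 _ hd)).
    lia.
  - have mu0 : mu = 0 by lia.
    subst mu; case: (leqP a q) => az; first by rewrite /= in qk; lia.
    have := Hg _ az; rewrite /= in H2 fq; lia.
  - have h1 : iter mu fc q <= iter mu fc y.-1 by apply: iter_mono; lia.
    subst mu; lia.
have E : iter d.+2 fc z = iter mu fc y by rewrite iterS hz fq H2.
case: (ltngtP d.+2 mu) => hd.
- have h1 := iter_mono d.+2 (ltnW zy).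
  have h2 : iter d.+2 fc y < iter mu fc y by exact: (iter_lt hd (H3 _ hd)).
  lia.
- case: (leqP a z) => az.
    have h1 := iter_mono mu az.
    have h2 := iter_leq z (hd : mu <= d.+1). lia.
  have := IH (fc z); rewrite -iterSr => /(_ hz).
  have := Hg _ az; lia.
- have h1 : iter mu fc z <= iter mu fc y.-1 by apply: iter_mono; lia.
  subst mu; lia.
Qed.


Definition valid (M : nmod) := [&& M.1 < n, 0 < M.2 & M.2 <= c M.1].

Lemma syz_valid M : valid M -> ~~ is_projective c M ->
  valid (syzygy c M) && (M.1 < (syzygy c M).1).
Proof.
case: M => t l; rewrite /valid /is_projective /syzygy /= => /and3P[tn l0 lc] np.
have := c_bound tn; have h : l < c t by rewrite ltn_neqAle np lc.
have := @c_mono t (t + l) (leq_addr _ _).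
move=> hm hb; have tln : t + l < n by lia.
move: (hm tln) => {}hm.
rewrite /=; apply/andP; split; [apply/and3P; split|]; lia.
Qed.

Lemma pdim_spec fuel M : valid M -> n <= M.1 + fuel ->
  [/\ (forall t, t < pdim_fuel c fuel M ->
        valid (iter t (syzygy c) M) && ~~ is_projective c (iter t (syzygy c) M)),
      valid (iter (pdim_fuel c fuel M) (syzygy c) M) &
      is_projective c (iter (pdim_fuel c fuel M) (syzygy c) M)].
Proof.
elim: fuel M => [|fu IH] M vM hf.
  by move: vM; rewrite /valid => /and3P[h _ _]; lia.
rewrite /=; case: ifP => pM.
  by split => // t; rewrite ltn0.
have /andP[vS lt] := syz_valid vM (negbT pM).
have [H1 H2 H3] := IH _ vS ltac:(lia).
split; rewrite ?iterSr //.
by case=> [|t]; [rewrite /= vM pM | rewrite ltnS iterSr => /H1].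
Qed.

Lemma first_proj_unique M T p :
  (forall t, t < T -> ~~ is_projective c (iter t (syzygy c) M)) ->
  is_projective c (iter T (syzygy c) M) ->
  (forall t, t < p -> ~~ is_projective c (iter t (syzygy c) M)) ->
  is_projective c (iter p (syzygy c) M) -> T = p.
Proof.
move=> h1 h2 h3 h4; case: (ltngtP T p) => // hl.
  by move: (h3 _ hl); rewrite h2.
by move: (h1 _ hl); rewrite h4.
Qed.

Local Open Scope ring_scope.

Fixpoint resv (fuel : nat) (M : nmod) : nat -> rat :=
  match fuel with
  | 0 => fun _ => 0
  | fu.+1 => if is_projective c M then (fun q => ((q == M.1)%N)%:R)
             else (fun q => ((q == M.1)%N)%:R - resv fu (syzygy c M) q)
  end.

Lemma sum_delta (F : nat -> rat) t : (t < n)%N ->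
  \sum_(q < n) F q * ((q : nat) == t)%:R = F t.
Proof.
move=> tn; rewrite (bigD1 (Ordinal tn)) //= eqxx mulr1 big1 ?addr0 // => q hq.
suff -> : ((q : nat) == t) = false by rewrite mulr0.
apply/negbTE; move: hq; apply: contra => /eqP h; apply/eqP/val_inj; exact: h.
Qed.

Lemma bool_sub (b1 b2 b3 : bool) : (b1 : nat) = (b2 + b3)%N ->
  (b1%:R - b2%:R = b3%:R :> rat).
Proof. by move=> h; rewrite h addnC natrD addrK. Qed.

Lemma resv_dim fuel M : valid M -> (n <= M.1 + fuel)%N -> forall p,
  \sum_(q < n) (((q <= p) && (p < q + c q))%N)%:R * resv fuel M q
  = (((M.1 <= p) && (p < M.1 + M.2))%N)%:R.
Proof.
elim: fuel M => [|fu IH] M vM hf p.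
  by move: vM; rewrite /valid => /and3P[h _ _]; lia.
move: (vM); rewrite /valid => /and3P[tn l0 lc].
rewrite /=; case: ifP => pM.
  rewrite (sum_delta (fun q => (((q <= p) && (p < q + c q))%N)%:R)) //.
  by move: pM; rewrite /is_projective => /eqP ->.
have /andP[vS lt] := syz_valid vM (negbT pM).
under eq_bigr do rewrite mulrBr.
rewrite sumrB (sum_delta (fun q => (((q <= p) && (p < q + c q))%N)%:R)) //.
rewrite IH //; last by lia.
apply: bool_sub.
have h : (M.2 < c M.1)%N by rewrite ltn_neqAle lc andbT; exact: negbT pM.
rewrite /syzygy /=.
case: (leqP M.1 p) => h1; case: (leqP (M.1 + M.2) p) => h2;
  case: (ltnP p (M.1 + c M.1)) => h3;
  case: (ltnP p (M.1 + M.2 + (c M.1 - M.2))) => h4; rewrite /= ?andbT ?andbF //; lia.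
Qed.

Lemma resv_low fuel M : valid M -> (n <= M.1 + fuel)%N ->
  let T := (iter (pdim_fuel c fuel M) (syzygy c) M).1 in
  [/\ (M.1 <= T)%N, (forall q, (T < q)%N -> resv fuel M q = 0) & resv fuel M T != 0].
Proof.
elim: fuel M => [|fu IH] M vM hf.
  by move: vM; rewrite /valid => /and3P[h _ _]; lia.
have E : pdim_fuel c fu.+1 M =
   if is_projective c M then 0%N else (pdim_fuel c fu (syzygy c M)).+1 by [].
have R : resv fu.+1 M = if is_projective c M then (fun q => ((q == M.1)%N)%:R)
             else (fun q => ((q == M.1)%N)%:R - resv fu (syzygy c M) q) by [].
rewrite E R; case: ifP => pM.
  split => // [q hq|]; last by rewrite eqxx oner_eq0.
  by rewrite (_ : (q == M.1) = false) //; apply/negbTE; rewrite neq_ltn hq orbT.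
have /andP[vS lt] := syz_valid vM (negbT pM).
have [H1 H2 H3] := IH _ vS ltac:(lia).
rewrite iterSr; split.
- exact: leq_trans (ltnW lt) H1.
- move=> q hq; rewrite H2 // subr0 (_ : (q == M.1) = false) //.
  apply/negbTE; rewrite neq_ltn; apply/orP; right; lia.
- rewrite (_ : (_ == M.1) = false) ?sub0r ?oppr_eq0 //.
  apply/negbTE; rewrite neq_ltn; apply/orP; right; lia.
Qed.


Local Close Scope ring_scope.

Definition ival x z : nmod := (x, z - x).
Definition zs x z t := if odd t then iter t./2 fc z else iter t./2 fc x.

Lemma zs_even x z m : zs x z m.*2 = iter m fc x.
Proof. by rewrite /zs odd_double doubleK. Qed.
Lemma zs_odd x z m : zs x z m.*2.+1 = iter m fc z.
Proof. by rewrite /zs /= odd_double /= uphalf_double. Qed.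
Lemma zsSS x z t : zs x z t.+2 = fc (zs x z t).
Proof. by rewrite /zs /=; case: (odd t). Qed.
Lemma zs0 x z : zs x z 0 = x. Proof. by []. Qed.
Lemma zs1 x z : zs x z 1 = z. Proof. by []. Qed.

Lemma valid_ival x z : valid (ival x z) = [&& x < n, x < z & z <= fc x].
Proof.
rewrite /valid /ival /fc /=; case: (ltnP x n) => h /=; last by [].
apply/andP/andP => [] [h1 h2]; split; lia.
Qed.

Lemma proj_ival x z : x < n -> x <= z -> is_projective c (ival x z) = (z == fc x).
Proof. move=> xn xz; rewrite /is_projective /ival /= fc_lt //; apply/eqP/eqP; lia. Qed.

Lemma syz_ival x z : x < n -> x <= z -> syzygy c (ival x z) = ival z (fc x).
Proof. move=> xn xz; rewrite /syzygy /ival /= fc_lt //; congr pair; lia. Qed.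

Lemma chain_ival x z t : x <= z ->
  (forall t', t' < t -> valid (iter t' (syzygy c) (ival x z))) ->
  iter t (syzygy c) (ival x z) = ival (zs x z t) (zs x z t.+1).
Proof.
move=> xz; elim: t => [|t IH] hv //=.
rewrite IH; last by move=> t' ht'; apply: hv; lia.
have := hv t (ltnSn t); rewrite IH; last by move=> t' ht'; apply: hv; lia.
rewrite valid_ival => /and3P[h1 h2 h3].
by rewrite syz_ival // ?zsSS //; lia.
Qed.

Lemma inj_env_props i : i < n ->
  let a := (inj_env c i).1 in
  [/\ a <= i, inj_env c i = ival a i.+1, i < fc a & forall z, z < a -> fc z < i.+1].
Proof.
move=> iin a.
set P := fun a => i < a + c a.
have hasP : has P (iota 0 i.+1).
  apply/hasP; exists i; first by rewrite mem_iota; lia.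
  rewrite /P; have := c_pos iin; lia.
have af : a < i.+1 by move: hasP; rewrite has_find size_iota.
have Pa : P a by have := nth_find 0 hasP; rewrite nth_iota.
split.
- lia.
- by [].
- by rewrite fc_lt //; lia.
- move=> z za; have := before_find 0 za; rewrite nth_iota ?add0n; last by lia.
  by rewrite /P fc_lt; lia.
Qed.

Lemma valid_simple i : i < n -> valid (simple_mod i).
Proof. move=> h; rewrite /valid /=; have := c_pos h; lia. Qed.

Lemma valid_inj i : i < n -> valid (inj_env c i).
Proof.
move=> h; have [h1 E h3 _] := inj_env_props h.
rewrite E valid_ival; apply/and3P; split; lia.
Qed.

Lemma simple_ival i : simple_mod i = ival i i.+1.
Proof. by rewrite /simple_mod /ival subSnn. Qed.


Lemma chain_facts M x z : valid M -> M = ival x z -> x <= z ->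
  let p := pdim_fuel c n M in
  [/\ forall t, t <= p -> iter t (syzygy c) M = ival (zs x z t) (zs x z t.+1),
      forall t, t <= p -> valid (ival (zs x z t) (zs x z t.+1)),
      forall t, t < p -> ~~ is_projective c (ival (zs x z t) (zs x z t.+1)) &
      is_projective c (ival (zs x z p) (zs x z p.+1))].
Proof.
move=> vM EM xz p.
have [H1 H2 H3] := pdim_spec vM (leq_addl _ _).
have E : forall t, t <= p -> iter t (syzygy c) M = ival (zs x z t) (zs x z t.+1).
  move=> t tp; rewrite EM; apply: chain_ival => // t' ht'.
  by rewrite -EM; have /andP[] := H1 t' ltac:(lia).
split => //.
- move=> t tp; rewrite -E //; case: (ltnP t p) => h; first by have /andP[] := H1 t h.
  by have -> : t = p by lia.
- by move=> t tp; rewrite -E ?(ltnW tp) //; have /andP[] := H1 t tp.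
- by rewrite -E.
Qed.

Lemma ival_valid_inv x z : valid (ival x z) -> [/\ x < n, x < z & z <= fc x].
Proof. by rewrite valid_ival => /and3P. Qed.

Lemma ival_proj_inv x z : valid (ival x z) -> is_projective c (ival x z) = (z == fc x).
Proof. move=> /ival_valid_inv [h1 h2 h3]; apply: proj_ival; lia. Qed.

Lemma vertex i : i < n ->
  let a := (inj_env c i).1 in
  let e := e_simple n c i in
  [/\ valid (N_simple n c i),
      pdim_fuel c n (N_simple n c i) = e,
      (odd e -> [/\ iter e./2 fc i < iter e./2 fc i.+1,
                    iter e./2 fc i.+1 < iter e./2.+1 fc a,
                    iter e./2 fc i.+1 < n &
                    hhat n c i = iter e./2 fc i.+1]) &
      (~~ odd e -> [/\ iter e./2 fc i < iter e./2 fc i.+1,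
                    iter e./2 fc i.+1 = fc (iter e./2 fc a),
                    (forall d, d < e./2 -> iter d fc i.+1 < n) &
                    hhat n c i = iter e./2 fc a])].
Proof.
move=> hi a e.
have [ale Ieq ifa Hg] := inj_env_props hi.
rewrite -/a in ale Ieq ifa Hg.
have vS := valid_simple hi; have vI := valid_inj hi.
have [SE SV SN SP] := chain_facts vS (simple_ival i) (leqnSn i).
have [IE IV IN IP] := chain_facts vI Ieq ltac:(lia).
rewrite -/a in IE IV IN IP.
set pS := pdim_fuel c n (simple_mod i) in SE SV SN SP.
set pI := pdim_fuel c n (inj_env c i) in IE IV IN IP.
have ee : e = minn pS pI by [].
have eh := odd_double_half e.
rewrite /hhat -/e.
case: (boolP (odd e)) => oe.
-
  set m := e./2 in eh *.
  have em : e = m.*2.+1 by move: eh; rewrite oe; lia.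
  have pSI : pS <= pI.
    rewrite leqNgt; apply/negP => lt.
    have ePI : e = pI by rewrite ee; lia.
    have vI' := IV e ltac:(lia); have pI' := IP; rewrite -ePI in pI'.
    rewrite em zs_odd -doubleS zs_even in vI' pI'.
    rewrite ival_proj_inv // in pI'.
    have hv := SV e ltac:(lia); have hn := SN e ltac:(lia).
    rewrite em zs_odd -doubleS zs_even in hv hn.
    rewrite ival_proj_inv // in hn; have [_ _ h3] := ival_valid_inv hv.
    have h4 := iter_mono m.+1 ale.
    move: pI' hn; rewrite ?iterS in h3 h4 * => /eqP hI hn.
    by apply: (negP hn); apply/eqP; lia.
  have ePS : e = pS by rewrite ee; lia.
  have NS : N_simple n c i = simple_mod i by rewrite /N_simple -/e oe.
  split.
  + by rewrite NS.
  + by rewrite NS -/pS ePS.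
  + move=> _.
    have v1 := SV m.*2 ltac:(lia); rewrite zs_even zs_odd in v1.
    have [_ h1 _] := ival_valid_inv v1.
    have v2 := IV m.*2 ltac:(lia); rewrite zs_even zs_odd in v2.
    have n2 := IN m.*2 ltac:(lia); rewrite zs_even zs_odd in n2.
    rewrite ival_proj_inv // in n2; have [_ _ h2] := ival_valid_inv v2.
    have v3 := SV e ltac:(lia); rewrite em zs_odd in v3.
    have [h3 _ _] := ival_valid_inv v3.
    split => //.
    * rewrite iterS; rewrite ltn_neqAle h2 andbT; exact: n2.
    * rewrite NS ePS SE // -ePS em zs_odd //.
  + by case.
-
  set m := e./2 in eh *.
  have em : e = m.*2 by move: eh; rewrite (negbTE oe); lia.
  have pIS : pI <= pS.
    rewrite leqNgt; apply/negP => lt.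
    have ePS : e = pS by rewrite ee; lia.
    have vS' := SV e ltac:(lia); have pS' := SP; rewrite -ePS in pS'.
    rewrite em zs_even zs_odd in vS' pS'.
    rewrite ival_proj_inv // in pS'.
    have hv := IV e ltac:(lia); have hn := IN e ltac:(lia).
    rewrite em zs_even zs_odd in hv hn.
    rewrite ival_proj_inv // in hn; have [_ _ h3] := ival_valid_inv hv.
    have h4 := iter_mono m.+1 ale.
    move: pS' hn; rewrite ?iterS in h3 h4 * => /eqP hS hn.
    by apply: (negP hn); apply/eqP; lia.
  have ePI : e = pI by rewrite ee; lia.
  have NI : N_simple n c i = inj_env c i by rewrite /N_simple -/e (negbTE oe).
  split.
  + by rewrite NI.
  + by rewrite NI -/pI ePI.
  + by case.
  + move=> _.
    have vp := IV e ltac:(lia); have pp := IP.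
    rewrite -ePI em zs_even zs_odd in pp; rewrite em zs_even zs_odd in vp.
    rewrite ival_proj_inv // in pp.
    split.
    * case E: m => [|m']; first by rewrite /=; lia.
      rewrite E in em.
      have v1 := SV m'.*2.+1 ltac:(rewrite doubleS in em; lia).
      have n1 := SN m'.*2.+1 ltac:(rewrite doubleS in em; lia).
      rewrite zs_odd -doubleS zs_even in v1 n1.
      rewrite ival_proj_inv // in n1; have [_ _ h2] := ival_valid_inv v1.
      rewrite [iter m'.+1 fc i.+1]iterS ltn_neqAle h2 andbT; exact: n1.
    * by apply/eqP.
    * move=> d dm; have v := IV d.*2.+1 ltac:(lia).
      rewrite zs_odd -doubleS zs_even in v; by have [] := ival_valid_inv v.
    * rewrite NI ePI IE // -ePI em zs_even //.
Qed.


Lemma hhat_lt i : i < n -> hhat n c i < n.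
Proof.
move=> hi; have [vN pN _ _] := vertex hi.
have [_ v _] := pdim_spec vN (leq_addl _ _).
by move: v; rewrite pN /valid => /and3P[].
Qed.

Local Open Scope ring_scope.

Lemma nat_sub_eq (a b c' d : nat) : (a + d = c' + b)%N -> (a%:R - b%:R = c'%:R - d%:R :> rat).
Proof. move=> h; have : (a%:R + d%:R = c'%:R + b%:R :> rat) by rewrite -!natrD h. lra. Qed.

Ltac boolcase := repeat match goal with
  | |- context [(?a < ?b)%N] => case: (ltnP a b) => ?
  | |- context [(?a <= ?b)%N] => case: (leqP a b) => ?
  | |- context [(?a == ?b)%N] => case: (eqVneq a b) => ?
  end; simpl; lia.

Definition vv (x : nat -> rat) p :=
  \sum_(q < n) (((q <= p) && (p < q + c q))%N)%:R * x q.

Lemma sum_delta' (x : nat -> rat) p :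
  \sum_(q < n) ((q : nat) == p)%:R * x q = ((p < n)%N)%:R * x p.
Proof.
case: (ltnP p n) => h.
  by rewrite mul1r -(sum_delta x h); apply: eq_bigr => q _; rewrite mulrC.
rewrite mul0r big1 // => q _; rewrite (_ : ((q : nat) == p) = false) ?mul0r //.
apply/negbTE; rewrite neq_ltn (leq_trans (ltn_ord q) h) //.
Qed.

Lemma F1 (x : nat -> rat) p :
  vv x p - (if p is p'.+1 then vv x p' else 0) =
  ((p < n)%N)%:R * x p - \sum_(q < n) ((q + c q == p)%N)%:R * x q.
Proof.
have E : vv x p - (if p is p'.+1 then vv x p' else 0) =
  \sum_(q < n) (((q : nat) == p)%:R - ((q + c q == p)%N)%:R) * x q.
  rewrite /vv; case: p => [|p].
    rewrite subr0; apply: eq_bigr => q _; congr (_ * _).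
    have := c_pos (ltn_ord q); case: (q : nat) => [|q'] h /=.
      by rewrite add0n h (_ : (c 0 == 0)%N = false) ?subr0 //; apply/negbTE; rewrite -lt0n.
    by rewrite subrr.
  rewrite -sumrB; apply: eq_bigr => q _; rewrite -mulrBl; congr (_ * _).
  have := c_pos (ltn_ord q) => h; apply: nat_sub_eq.
  boolcase.
rewrite E; under eq_bigr do rewrite mulrBl.
by rewrite sumrB sum_delta'.
Qed.

Lemma desc_zero (x : nat -> rat) j :
  (forall p, (j <= p)%N -> vv x p = 0) ->
  forall q, (q < n)%N -> (forall d z, iter d fc z = q -> (j < z)%N) -> x q = 0.
Proof.
move=> hv; elim/ltn_ind => q IH qn hd.
have jq : (j < q)%N := hd 0%N q erefl.
have := F1 x q; rewrite hv ?(ltnW jq) //.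
case: q IH qn hd jq => [|q] IH qn hd jq; first by rewrite ltn0 in jq.
rewrite hv; last by lia.
rewrite subrr qn mul1r => /eqP; rewrite eq_sym subr_eq0 => /eqP ->.
apply: big1 => q' _; case: eqP => h; last by rewrite mul0r.
rewrite IH ?mulr0 //.
- have := c_pos (ltn_ord q'); lia.
- move=> d z hz; apply: (hd d.+1); rewrite iterS hz fc_lt //.
Qed.


Lemma N_end i : (i < n)%N -> ((N_simple n c i).1 + (N_simple n c i).2 = i.+1)%N.
Proof.
move=> hi; rewrite /N_simple; case: ifP => _ /=; first by lia.
have [h1 _ _ _] := inj_env_props hi; rewrite /inj_env /= in h1 *; lia.
Qed.

Lemma N_start i : (i < n)%N -> ((N_simple n c i).1 <= i)%N.
Proof.
move=> hi; rewrite /N_simple; case: ifP => _ /=; first by [].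
by have [h1 _ _ _] := inj_env_props hi.
Qed.

Lemma resvN i : (i < n)%N ->
  [/\ forall p, vv (resv n (N_simple n c i)) p =
                 ((((N_simple n c i).1 <= p) && (p < i.+1))%N)%:R,
      forall q, (hhat n c i < q)%N -> resv n (N_simple n c i) q = 0 &
      resv n (N_simple n c i) (hhat n c i) != 0].
Proof.
move=> hi; have [vN pN _ _] := vertex hi.
have [_ H2 H3] := resv_low vN (leq_addl _ _).
rewrite pN -/(hhat n c i) in H2 H3.
split => // p; rewrite /vv resv_dim // ?leq_addl // N_end //.
Qed.

Lemma hinj j j' : (j < n)%N -> (j' < j)%N -> hhat n c j' = hhat n c j -> False.
Proof.
move=> hj hjj' E.
have hj' : (j' < n)%N by lia.
set x := resv n (N_simple n c j').
have [Vx Lx Kx] := resvN hj'; rewrite -/x in Vx Lx Kx.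
have hv : forall p, (j <= p)%N -> vv x p = 0.
  move=> p hp; rewrite Vx (_ : (p < j'.+1)%N = false) ?andbF //.
  by apply/negbTE; rewrite -leqNgt; lia.
set k := hhat n c j in E.
rewrite E in Lx Kx.
have kn : (k < n)%N := hhat_lt hj.
have [_ _ Hodd Heven] := vertex hj.
have [ale _ _ Hg] := inj_env_props hj.
case: (boolP (odd (e_simple n c j))) => oe.
- have [H1 H2 H3 Hk] := Hodd oe.
  have := LS Hg H1 H2 H3; rewrite -Hk -/k => Hd.
  have : x k = 0.
    apply: (desc_zero hv kn) => d z /Hd; lia.
  by move/eqP; rewrite (negbTE Kx).
- have [H1 H2 H3 Hk] := Heven oe.
  have Hd := LI Hg H1 H2 H3; rewrite -Hk -/k in Hd.
  have fk : fc k = iter (e_simple n c j)./2 fc j.+1 by rewrite /k Hk -H2.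
  have jfk : (j < fc k)%N by rewrite fk; have := iter_ge (e_simple n c j)./2 j.+1; lia.
  have kfk : (k < fc k)%N := fc_gt kn.
  have := F1 x (fc k).
  rewrite hv ?(ltnW jfk) //.
  case E2: (fc k) jfk kfk => [|p] jfk kfk; first by lia.
  rewrite hv; last by lia.
  rewrite subrr Lx ?mulr0 // sub0r => /eqP; rewrite eq_sym oppr_eq0 => /eqP hs.
  have : x k = 0.
    rewrite -hs (bigD1 (Ordinal kn)) //= -fc_lt // E2 eqxx mul1r big1 ?addr0 // => q hq.
    case: eqP => h; last by rewrite mul0r.
    rewrite mul1r.
    have qk : (q : nat) != k by apply: contra hq => /eqP h'; apply/eqP/val_inj.
    case: (ltngtP (q : nat) k) => h2; last by rewrite h2 eqxx in qk.
    + apply: (desc_zero hv (ltn_ord q)) => d z hz.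
      have := Hd q h2 _ d z hz; rewrite fc_lt // h E2; lia.
    + exact: Lx.
  by move/eqP; rewrite (negbTE Kx).
Qed.

End Nak.

Section Upper.
Local Open Scope ring_scope.
Variable m : nat.
Implicit Types A B : 'M[rat]_m.

Lemma upper_mul A B : upper_triangular A -> upper_triangular B ->
  upper_triangular (A *m B).
Proof.
move=> uA uB i j ji; rewrite mxE big1 // => k _.
case: (ltnP k i) => h; first by rewrite uA ?mul0r.
by rewrite uB ?mulr0 //; lia.
Qed.

Lemma upper_opp A : upper_triangular A -> upper_triangular (- A).
Proof. by move=> uA i j ji; rewrite mxE uA ?oppr0. Qed.

Lemma upper_trT A : is_trig_mx A -> upper_triangular A^T.
Proof. by move=> /is_trig_mxP tA i j ji; rewrite mxE tA. Qed.

Lemma upper_trig_tr A : upper_triangular A -> is_trig_mx A^T.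
Proof. by move=> uA; apply/is_trig_mxP => i j ij; rewrite mxE uA. Qed.

Lemma det_upper A : upper_triangular A -> \det A = \prod_(i < m) A i i.
Proof.
move=> uA; rewrite -det_tr det_trig ?upper_trig_tr //.
by apply: eq_bigr => i _; rewrite mxE.
Qed.

Lemma upper_diag_unit A : upper_triangular A -> A \in unitmx -> forall i, A i i != 0.
Proof.
move=> uA; rewrite unitmxE det_upper // unitfE => hp i; apply/negP => /eqP h.
by move: hp; rewrite (bigD1 i) //= h mul0r eqxx.
Qed.

Lemma upper_inv A : upper_triangular A -> A \in unitmx -> upper_triangular (invmx A).
Proof.
move=> uA Au; set B := invmx A; have AB := mulmxV Au.
have dA := upper_diag_unit uA Au.
suff H : forall k (i j : 'I_m), (m - k <= i)%N -> (j < i)%N -> B i j = 0.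
  by move=> i j ji; apply: (H m); lia.
elim=> [|k IH] i j hi ji; first by have := ltn_ord i; lia.
have E : (A *m B) i j = 0.
  rewrite AB mxE; have -> : (i == j) = false by apply/negbTE; rewrite neq_ltn ji orbT.
  by rewrite /= mulr0n.
move: E; rewrite mxE (bigD1 i) //= big1 ?addr0 => [/eqP|l hl].
  by rewrite mulf_eq0 (negbTE (dA i)) /= => /eqP.
case: (ltngtP l i) => h.
- by rewrite uA ?mul0r.
- by rewrite IH ?mulr0 //; lia.
- by move: hl; rewrite (val_inj h) eqxx.
Qed.

Lemma perm_le_id (p : 'S_m) : (forall i, (p i <= i)%N) -> p = 1%g.
Proof.
move=> hp; apply/permP => i; rewrite perm1.
move: {2}(i : nat) (erefl (i : nat)) => k; elim/ltn_ind: k i => k IH i ik.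
apply/val_inj/eqP; rewrite eqn_leq hp /=; rewrite leqNgt; apply/negP => lt.
have := IH (p i) ltac:(lia) (p i) erefl => /perm_inj h.
by rewrite h ltnn in lt.
Qed.

Lemma perm_mx_entry (s : 'S_m) i j : (perm_mx s : 'M[rat]_m) i j = (s i == j)%:R.
Proof. by rewrite /perm_mx !mxE. Qed.

Lemma mul_mx_perm_entry A (s : 'S_m) i j : (A *m perm_mx s) i j = A i (s^-1 j)%g.
Proof.
rewrite mxE (bigD1 (s^-1 j)%g) //= perm_mx_entry permKV eqxx /= mulr1n mulr1.
rewrite big1 ?addr0 // => k hk; rewrite perm_mx_entry (_ : (s k == j) = false) ?mulr0 //.
by apply/negbTE; apply: contra hk => /eqP <-; rewrite permK.
Qed.

Lemma mul_perm_mx_entry A (s : 'S_m) i j : (perm_mx s *m A) i j = A (s i) j.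
Proof.
rewrite mxE (bigD1 (s i)) //= perm_mx_entry eqxx /= mulr1n mul1r.
rewrite big1 ?addr0 // => k hk; rewrite perm_mx_entry (_ : (s i == k) = false) ?mul0r //.
by apply/negbTE; rewrite eq_sym.
Qed.

Lemma perm_unique (s s' : 'S_m) A B :
  upper_triangular A -> upper_triangular B ->
  (forall i, A i i != 0) -> (forall i, B i i != 0) ->
  A *m perm_mx s = perm_mx s' *m B -> s = s'.
Proof.
move=> uA uB dA dB E.
have H : forall i, (s' (s^-1 i)%g <= i)%N.
  move=> i; have := congr1 (fun M : 'M[rat]_m => M (s^-1 i)%g i) E.
  rewrite mul_mx_perm_entry mul_perm_mx_entry => h.
  rewrite leqNgt; apply/negP => lt; move: (dA (s^-1 i)%g); rewrite h uB ?eqxx //.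
have h1 : (s^-1 * s')%g = 1%g.
  by apply: perm_le_id => i; rewrite permM; exact: H i.
by rewrite -[s']mul1g -(mulgV s) -mulgA h1 mulg1.
Qed.

End Upper.

Section Main.
Variables (n : nat) (c : nat -> nat).
Hypothesis Hc : kupisch n c.
Local Open Scope ring_scope.

Definition hh (i : 'I_n) : 'I_n := Ordinal (hhat_lt Hc (ltn_ord i)).

Lemma hh_inj : injective hh.
Proof.
move=> i i' /(congr1 val) /= E; apply/val_inj/eqP.
case: (ltngtP i i') => // h; exfalso.
- exact: (hinj Hc (ltn_ord i') h E).
- exact: (hinj Hc (ltn_ord i) h (esym E)).
Qed.

Definition sig : 'S_n := perm hh_inj.
Definition sp : 'S_n := (sig^-1)%g.

Definition Xm : 'M[rat]_n := \matrix_(r, i) resv c n (N_simple n c (i : nat)) r.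
Definition Dm : 'M[rat]_n :=
  \matrix_(r, i) (((((N_simple n c i).1 <= r) && (r < i.+1))%N)%:R : rat).
Definition Um : 'M[rat]_n := \matrix_(r, k) Xm r (sp k).

Lemma cartan_entry (i j : 'I_n) :
  cartan n c i j = ((((j <= i) && (i < j + c j))%N)%:R : rat).
Proof. by rewrite mxE; case: ifP. Qed.

Lemma cartanX : cartan n c *m Xm = Dm.
Proof.
apply/matrixP => r i; rewrite !mxE.
have [V _ _] := resvN Hc (ltn_ord i); rewrite -V /vv.
by apply: eq_bigr => q _; rewrite cartan_entry mxE.
Qed.

Lemma Dm_upper : upper_triangular Dm.
Proof.
move=> i j ji; rewrite mxE (_ : (i < j.+1)%N = false) ?andbF //.
by apply/negbTE; rewrite -leqNgt.
Qed.

Lemma Dm_unit : Dm \in unitmx.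
Proof.
rewrite unitmxE (det_upper Dm_upper) big1 ?unitr1 // => i _.
by rewrite mxE N_start // leqnn.
Qed.

Lemma cartan_trig : is_trig_mx (cartan n c).
Proof.
apply/is_trig_mxP => i j ij; rewrite cartan_entry.
by rewrite (_ : (j <= i)%N = false) //; apply/negbTE; rewrite -ltnNge.
Qed.

Lemma cartan_unit : cartan n c \in unitmx.
Proof.
rewrite unitmxE det_trig ?cartan_trig // big1 ?unitr1 // => i _.
by rewrite cartan_entry leqnn /= -{1}[i : nat]addn0 ltn_add2l (c_pos Hc (ltn_ord i)).
Qed.

Lemma X_eq : Xm = Um *m perm_mx sp.
Proof.
by apply/matrixP => r i; rewrite mul_mx_perm_entry [Um _ _]mxE (permKV sp).
Qed.

Lemma Um_upper : upper_triangular Um.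
Proof.
move=> r k kr; rewrite !mxE.
have E : hhat n c (sp k) = k.
  have E0 : (hh (sig^-1 k)%g : nat) = k by have := permKV sig k; rewrite {1}/sig permE => ->.
  exact: E0.
have [_ L _] := resvN Hc (ltn_ord (sp k)).
by rewrite L // E.
Qed.

Lemma invcartan : invmx (cartan n c) = Um *m perm_mx sp *m invmx Dm.
Proof.
have E : Xm = invmx (cartan n c) *m Dm by rewrite -cartanX mulKmx ?cartan_unit.
by rewrite -X_eq E mulmxK ?Dm_unit.
Qed.

Definition U1m : 'M[rat]_n := - ((cartan n c)^T *m Um).
Definition U2m : 'M[rat]_n := invmx Dm.

Lemma cox_eq : coxeter n c = U1m *m perm_mx sp *m U2m.
Proof. by rewrite /coxeter invcartan /U1m /U2m !mulmxA mulNmx mulNmx. Qed.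

Lemma U1_upper : upper_triangular U1m.
Proof. apply: upper_opp; apply: upper_mul (upper_trT cartan_trig) Um_upper. Qed.

Lemma U2_upper : upper_triangular U2m.
Proof. exact: upper_inv Dm_upper Dm_unit. Qed.

Lemma cox_unit : coxeter n c \in unitmx.
Proof.
rewrite /coxeter -scaleN1r unitmxZ ?unitrN1 // unitmx_mul unitmx_tr unitmx_inv.
by rewrite cartan_unit.
Qed.

Lemma main :
  (exists (s : 'S_n) (U1 U2 : 'M[rat]_n), bruhat_decomp (coxeter n c) s U1 U2) /\
  (forall (s : 'S_n) (U1 U2 : 'M[rat]_n),
     bruhat_decomp (coxeter n c) s U1 U2 ->
     forall i j : 'I_n,
       ((perm_mx s : 'M[rat]_n) j i != 0) = (nat_of_ord j == hhat n c i)%N).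
Proof.
split.
  exists sp, U1m, U2m; split; [exact: U1_upper | exact: U2_upper | exact: cox_eq].
move=> s' V1 V2 [uV1 uV2 EV] i j.
have CU := cox_unit.
have := CU; rewrite EV !unitmx_mul => /andP[/andP[V1u _] V2u].
have := CU; rewrite cox_eq !unitmx_mul => /andP[/andP[U1u _] U2u].
set A := invmx V1 *m U1m; set B := V2 *m invmx U2m.
have uA : upper_triangular A by apply: upper_mul (upper_inv uV1 V1u) U1_upper.
have uB : upper_triangular B by apply: upper_mul uV2 (upper_inv U2_upper U2u).
have Au : A \in unitmx by rewrite unitmx_mul unitmx_inv V1u.
have Bu : B \in unitmx by rewrite unitmx_mul unitmx_inv V2u.
have C : U1m *m perm_mx sp *m U2m = V1 *m perm_mx s' *m V2 by rewrite -cox_eq EV.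
have E1 : invmx V1 *m (U1m *m perm_mx sp *m U2m) *m invmx U2m = A *m perm_mx sp.
  by rewrite /A !mulmxA mulmxK.
have E2 : invmx V1 *m (V1 *m perm_mx s' *m V2) *m invmx U2m = perm_mx s' *m B.
  by rewrite /B !mulmxA (mulVmx V1u) mul1mx.
have E : A *m perm_mx sp = perm_mx s' *m B by rewrite -E1 C E2.
have Es := perm_unique uA uB (upper_diag_unit uA Au) (upper_diag_unit uB Bu) E.
rewrite -Es perm_mx_entry pnatr_eq0 /sp.
rewrite (_ : ((sig^-1)%g j == i) = (j == sig i)); last first.
  by rewrite -(inj_eq (@perm_inj _ sig)) permKV.
rewrite /sig permE (_ : (j == hh i) = ((j : nat) == hhat n c i)) //; by case: (nat_of_ord j == hhat n c i).
Qed.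

End Main.

Unset Implicit Arguments.
Local Open Scope ring_scope.

Theorem theorem3p1 (n : nat) (c : nat -> nat) (Hc : kupisch n c) :
  (exists (s : 'S_n) (U1 U2 : 'M[rat]_n), bruhat_decomp (coxeter n c) s U1 U2) /\
  (forall (s : 'S_n) (U1 U2 : 'M[rat]_n),
     bruhat_decomp (coxeter n c) s U1 U2 ->
     forall i j : 'I_n,
       ((perm_mx s : 'M[rat]_n) j i != 0) = (nat_of_ord j == hhat n c i)%N).
Proof. exact: (main Hc). Qed.
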